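(* Let $\mathbb X,\mathbb Y$ be bounded $\ell$-connected domains, $h\in\mathfrak D(\mathbb X,\mathbb Y)$, and $w\in\partial\mathbb Y$. If $h^{-1}(w)$ intersects a domain $\Omega$ compactly contained in $\mathbb X$, then $h^{-1}(w)$ also intersects $\partial\Omega$.
   Context: A bounded $\ell$-connected domain ($1\le \ell<\infty$) is a bounded domain in $\mathbb C$ whose boundary consists of $\ell$ disjoint continua. Denote the boundary components of $\mathbb X$ by $\mathfrak X_1,\dots,\mathfrak X_\ell$ and those of $\mathbb Y$ by $\Upsilon_1,\dots,\Upsilon_\ell$. A sequence of maps $h_k:\mathbb X\to\mathbb Y$ converges $cd$-uniformly to $h:\mathbb X\to\mathbb R^2$ if $h_k\to h$ uniformly on compact subsets of $\mathbb X$ and $\operatorname{dist}(h_k(x),\partial\mathbb Y)\to\operatorname{dist}(h(x),\partial\mathbb Y)$ uniformly in $x\in\mathbb X$. $\mathscr H_{cd}(\mathbb X,\mathbb Y)$ denotes the class of $cd$-limits of homeomorphisms $h_k$ of $\mathbb X$ onto $\mathbb Y$ satisfying the (fixed) boundary correspondence $h_k(x)\to\Upsilon_\nu$ as $x\to\mathfrak X_\nu$, $\nu=1,\dots,\ell$. A deformation is a map $h\in\mathscr H_{cd}(\mathbb X,\mathbb Y)$ with $h\in\mathscr W^{1,2}(\mathbb X,\mathbb R^2)$, Jacobian $J_h=|h_z|^2-|h_{\bar z}|^2\ge0$ a.e., and $\iint_{\mathbb X}J_h\le|\mathbb Y|$; the class of deformations is $\mathfrak D(\mathbb X,\mathbb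 Y)$. *)

(* Defs.v *)
(* The plane R^2 = C is modelled as R * R. *)
From HB Require Import structures.
From mathcomp Require Import all_boot all_order all_algebra.
From mathcomp Require Import all_classical all_reals all_analysis.
Set Implicit Arguments. Unset Strict Implicit. Unset Printing Implicit Defensive.
Import Order.TTheory GRing.Theory Num.Theory.
Import numFieldNormedType.Exports.
Local Open Scope classical_set_scope.
Local Open Scope ring_scope.

Section Defs.
Variable R : realType.

Local Notation pt := (R * R)%type.

Definition edist (p q : pt) : R :=
  Num.sqrt ((p.1 - q.1) ^+ 2 + (p.2 - q.2) ^+ 2).

Definition sdist (p : pt) (A : set pt) : R := inf [set edist p q | q in A].

Definition bd (A : set pt) : set pt := closure A `\` interior A.

Definition bounded_pt (A : set pt) : Prop :=
  exists M : R, forall p, A p -> edist p (0, 0) <= M.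

Definition domain (A : set pt) : Prop := open A /\ connected A /\ A !=set0.

Definition continuum (C : set pt) : Prop := compact C /\ connected C /\ C !=set0.

Definition ell_connected (l : nat) (X : set pt) (B : 'I_l -> set pt) : Prop :=
  [/\ (1 <= l)%N, domain X /\ bounded_pt X,
      (forall i, continuum (B i)),
      (forall i j, i != j -> setI (B i) (B j) = set0) &
      bd X = \bigcup_i B i].

Definition homeo_onto (X Y : set pt) (f : pt -> pt) : Prop :=
  exists g : pt -> pt,
    [/\ (forall x, X x -> Y (f x)) /\ (forall y, Y y -> X (g y)),
        (forall x, X x -> g (f x) = x), (forall y, Y y -> f (g y) = y),
        {within X, continuous f} & {within Y, continuous g}].

Definition bdry_corr (l : nat) (X : set pt) (BX BY : 'I_l -> set pt)
  (f : pt -> pt) : Prop :=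
  forall i (e : R), 0 < e -> exists2 d : R, 0 < d &
    forall x, X x -> sdist x (BX i) < d -> sdist (f x) (BY i) < e.

Definition cd_conv (X Y : set pt) (hk : nat -> pt -> pt) (h : pt -> pt) : Prop :=
  (forall K, compact K -> K `<=` X ->
     forall e : R, 0 < e -> exists N, forall k, (N <= k)%N ->
       forall x, K x -> edist (hk k x) (h x) < e) /\
  (forall e : R, 0 < e -> exists N, forall k, (N <= k)%N ->
       forall x, X x -> `| sdist (hk k x) (bd Y) - sdist (h x) (bd Y) | < e).

Definition H_cd (l : nat) (X Y : set pt) (BX BY : 'I_l -> set pt)
  (h : pt -> pt) : Prop :=
  exists hk : nat -> pt -> pt,
    (forall k, homeo_onto X Y (hk k) /\ bdry_corr X BX BY (hk k)) /\
    cd_conv X Y hk h.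

Definition leb2 := ((@lebesgue_measure R) \x (@lebesgue_measure R))%E.

Fixpoint iter_der (vs : seq pt) (f : pt -> R) : pt -> R :=
  match vs with
  | [::] => f
  | v :: vs' => fun x => 'D_v (iter_der vs' f) x
  end.

Definition smooth (f : pt -> R) : Prop :=
  forall vs : seq pt, continuous (iter_der vs f) /\
    forall (v x : pt), derivable (iter_der vs f) x v.

Definition test_fun (X : set pt) (phi : pt -> R) : Prop :=
  smooth phi /\
  exists K, [/\ compact K, K `<=` X & forall x, ~ K x -> phi x = 0].

Definition e1 : pt := (1, 0).
Definition e2 : pt := (0, 1).

Definition L1loc (X : set pt) (u : pt -> R) : Prop :=
  measurable_fun X u /\
  forall K, compact K -> K `<=` X -> leb2.-integrable K (EFin \o u).

Definition weak_deriv (X : set pt) (v : pt) (u g : pt -> R) : Prop :=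
  L1loc X u /\ L1loc X g /\
  forall phi, test_fun X phi ->
    (\int[leb2]_(x in X) (u x * 'D_v phi x)%:E
     = - \int[leb2]_(x in X) (g x * phi x)%:E)%E.

Definition L2 (X : set pt) (u : pt -> R) : Prop :=
  measurable_fun X u /\ (\int[leb2]_(x in X) ((u x) ^+ 2)%:E < +oo)%E.

(* h in W^{1,2}(X, R^2) with weak partials d i j = d h_i / d x_j, and
   the Jacobian J_h = |h_z|^2 - |h_zbar|^2 = det Dh is >= 0 a.e. with
   integral at most |Y| *)
Definition deformation (l : nat) (X Y : set pt) (BX BY : 'I_l -> set pt)
  (h : pt -> pt) : Prop :=
  H_cd X Y BX BY h /\
  exists d11 d12 d21 d22 : pt -> R,
    [/\ L2 X (fun x => (h x).1) /\ L2 X (fun x => (h x).2),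
        [/\ L2 X d11, L2 X d12, L2 X d21 & L2 X d22],
        [/\ weak_deriv X e1 (fun x => (h x).1) d11,
            weak_deriv X e2 (fun x => (h x).1) d12,
            weak_deriv X e1 (fun x => (h x).2) d21 &
            weak_deriv X e2 (fun x => (h x).2) d22],
        {ae leb2, forall x, X x -> 0 <= d11 x * d22 x - d12 x * d21 x} &
        (\int[leb2]_(x in X) (d11 x * d22 x - d12 x * d21 x)%:E <= leb2 Y)%E].

End Defs.

(* Main.v *)
Require Import Defs.
From HB Require Import structures.
From mathcomp Require Import all_boot all_order all_algebra.
From mathcomp Require Import all_classical all_reals all_analysis.
From mathcomp Require Import ring lra.
Import Order.TTheory GRing.Theory Num.Theory.
Import numFieldNormedType.Exports.
Local Open Scope classical_set_scope.
Local Open Scope ring_scope.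

Definition rho (R : realType) (w p : R * R) : R := `|p.1 - w.1| + `|p.2 - w.2|.
Arguments rho {R} w p.

Lemma edist_ge1 (R : realType) (p q : R * R) : `|p.1 - q.1| <= Defs.edist p q.
Proof.
rewrite /edist -sqrtr_sqr ler_sqrt ?lerDl ?sqr_ge0 //.
by rewrite addr_ge0 ?sqr_ge0.
Qed.

Lemma edist_ge2 (R : realType) (p q : R * R) : `|p.2 - q.2| <= Defs.edist p q.
Proof.
rewrite /edist -sqrtr_sqr ler_sqrt ?lerDr ?sqr_ge0 //.
by rewrite addr_ge0 ?sqr_ge0.
Qed.

Lemma rho_lip (R : realType) (w p q : R * R) :
  `|rho w p - rho w q| <= 2 * Defs.edist p q.
Proof.
rewrite /rho.
have -> : `|p.1 - w.1| + `|p.2 - w.2| - (`|q.1 - w.1| + `|q.2 - w.2|)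
  = (`|p.1 - w.1| - `|q.1 - w.1|) + (`|p.2 - w.2| - `|q.2 - w.2|) by ring.
apply: le_trans (ler_normD _ _) _.
rewrite mulr2n mulrDl mul1r; apply: lerD.
  apply: le_trans (ler_dist_dist _ _) _.
  have -> : p.1 - w.1 - (q.1 - w.1) = p.1 - q.1 by ring.
  exact: edist_ge1.
apply: le_trans (ler_dist_dist _ _) _.
have -> : p.2 - w.2 - (q.2 - w.2) = p.2 - q.2 by ring.
exact: edist_ge2.
Qed.

Lemma rho_cont (R : realType) (w : R * R) : continuous (rho w).
Proof.
move=> x; apply: cvgD; apply: cvg_norm; apply: cvgB.
- exact: cvg_fst.
- exact: cvg_cst.
- exact: cvg_snd.
- exact: cvg_cst.
Qed.

Lemma rho_ge0 (R : realType) (w p : R * R) : 0 <= rho w p.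
Proof. by rewrite /rho addr_ge0. Qed.

Lemma rho_eq0 (R : realType) (w p : R * R) : rho w p = 0 -> p = w.
Proof.
move=> /eqP; rewrite /rho paddr_eq0 // !normr_eq0 !subr_eq0 => /andP[/eqP h1 /eqP h2].
by case: p h1 h2 => a b; case: w => c d /= -> ->.
Qed.

Lemma rho_w (R : realType) (w : R * R) : rho w w = 0.
Proof. by rewrite /rho !subrr normr0 addr0. Qed.

Lemma ulim (T : topologicalType) (R : realType) (A : set T)
  (fk : nat -> T -> R) (f : T -> R) :
  (forall k, {within A, continuous (fk k)}) ->
  (forall e, 0 < e -> exists k, forall x, A x -> `|fk k x - f x| < e) ->
  {within A, continuous f}.
Proof.
move=> Hc Hu; apply/subspace_continuousP => x Ax.
apply/cvgrPdist_lt => e e0.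
have e30 : 0 < e / 3 by rewrite divr_gt0.
have [k Hk] := Hu _ e30.
have /subspace_continuousP/(_ x Ax) := Hc k.
move/cvgrPdist_lt/(_ _ e30) => Hn.
apply: filterS2 Hn (near_withinT A (nbhs_filter x)) => t Ht At.
have h1 := Hk x Ax; have h2 := Hk t At.
have -> : f x - f t = (f x - fk k x) + (fk k x - fk k t) + (fk k t - f t) by ring.
apply: le_lt_trans (ler_normD _ _) _.
apply: le_lt_trans (lerD (ler_normD _ _) (lexx _)) _.
rewrite distrC in h1.
have -> : e = e / 3 + e / 3 + e / 3 by field.
by rewrite ltrD // ltrD.
Qed.
Lemma gcv (R : realType) (a c : R) : a + t * c @[t --> (0:R)] --> a.
Proof.
have {2}-> : a = a + 0 * c by rewrite mul0r addr0.
apply: cvgD; first exact: cvg_cst.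
apply: cvgM; [exact: cvg_id | exact: cvg_cst].
Qed.
Lemma gcv2 (R : realType) (y w : R * R) :
  (y.1 + t * (w.1 - y.1), y.2 + t * (w.2 - y.2)) @[t --> (0:R)] --> y.
Proof.
case: y => a b /=; have := (cvg_pair (gcv _ a (w.1 - a)) (gcv _ b (w.2 - b))). move=> H. exact: H.
Qed.

Theorem mainTheorem17 (R : realType) (l : nat) (X Y : set ((R * R)%type))
  (BX BY : 'I_l -> set ((R * R)%type)) (h : (R * R)%type -> (R * R)%type) (w : (R * R)%type)
  (Omega : set ((R * R)%type)) :
  ell_connected X BX -> ell_connected Y BY ->
  deformation X Y BX BY h ->
  bd Y w ->
  domain Omega -> compact (closure Omega) -> closure Omega `<=` X ->
  (exists2 x, Omega x & h x = w) ->
  exists2 x, bd Omega x & h x = w.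
Proof.
move=> _ [_ [[oY _] _] _ _ _] [[hk [Hk [Hconv _]]] _] [_ nYw] [oO _] cK KX
  [x0 Ox0 hx0].
apply: contrapT => Hn.
have H x : bd Omega x -> h x <> w by move=> bx e; apply: Hn; exists x.
set K := closure Omega.
have OK : Omega `<=` K := @subset_closure _ Omega.
have cB : compact (bd Omega).
  have : compact (K `&` ~` Omega°).
    by apply: compact_closedI => //; rewrite closedC; exact: open_interior.
  by [].
have BK : bd Omega `<=` K by move=> x [].
have hkc k : {within K, continuous (hk k)}.
  have [[g [_ _ _ cf _]] _] := Hk k.
  exact: continuous_subspaceW KX cf.
have rkc k : {within K, continuous (rho w \o hk k)}.
  move=> x; exact: (continuous_comp (hkc k x) (rho_cont _ w _)).
have Hu e : 0 < e -> exists k, forall x, K x ->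
    `|(rho w \o hk k) x - (rho w \o h) x| < e.
  move=> e0; have [N HN] := Hconv K cK KX (e / 2) (divr_gt0 e0 (ltr0Sn _ 1)).
  exists N => x Kx /=; apply: le_lt_trans (rho_lip _ _ _ _) _.
  have := HN N (leqnn N) x Kx; lra.
have hc : {within K, continuous (rho w \o h)} := @ulim _ _ K (fun k => rho w \o hk k) (rho w \o h) rkc Hu.
have [dl d0 Hd] : exists2 dl : R, 0 < dl & forall x, bd Omega x -> dl <= rho w (h x).
  case: (pselect (bd Omega !=set0)) => [ne|e].
    have [c cB' Hc] := compact_EVT_min ne cB (continuous_subspaceW BK hc).
    rewrite inE in cB'.
    exists (rho w (h c)).
      rewrite lt_def rho_ge0 andbT; apply/eqP => /rho_eq0; exact: H.
    by move=> x bx; apply: (Hc x); rewrite inE.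
  by exists 1 => // x bx; exfalso; apply: e; exists x.
have [N HN] := Hu (dl / 2) (divr_gt0 d0 (ltr0Sn _ 1)).
have [x1 x1K Hmin] := compact_EVT_min (ex_intro _ x0 (OK _ Ox0)) cK (rkc N).
rewrite inE in x1K.
have r0 : rho w (hk N x0) < dl / 2.
  have := HN x0 (OK _ Ox0); rewrite /= hx0 rho_w subr0.
  by apply: le_lt_trans; exact: ler_norm.
have r1 : rho w (hk N x1) < dl / 2.
  apply: le_lt_trans r0; apply: (Hmin x0); rewrite inE; exact: OK.
case: (pselect (Omega° x1)) => int1; last first.
  have bx1 : bd Omega x1 by split.
  have := Hd _ bx1; have := HN _ x1K; rewrite ltr_norml /= => /andP[a b] c.
  move: r1 a b c; move: (rho w (hk N x1)) (rho w (h x1)) => u v; clear -d0; lra.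
have [[g [[fXY gYX] gf fg cf cg]] _] := Hk N.
set y1 := hk N x1.
have Yy1 : Y y1 := fXY _ (KX _ x1K).
have nYw' : ~ Y w by move=> Yw; apply: nYw; move: oY; rewrite openE; exact.
have rpos : 0 < rho w y1.
  rewrite lt_def rho_ge0 andbT; apply/eqP => /rho_eq0 e; apply: nYw'.
  by rewrite -e.
rewrite (continuous_open_subspace _ oY) in cg.
have ng : nbhs y1 (g @^-1` Omega).
  apply: (cg y1 (mem_set Yy1)); rewrite /y1 gf //; exact: KX.
have nY : nbhs y1 Y by move: oY; rewrite openE; exact.
have ngY : nbhs y1 (g @^-1` Omega `&` Y) by apply: filterI.
have gc := gcv2 _ y1 w.
have n0 := gc _ ngY.
have nr := @cvg_within _ (nbhs (0:R)) _ [set u | 0 < u] _ n0.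
have : \forall t \near (0:R)^'+, ((g @^-1` Omega `&` Y)
   (y1.1 + t * (w.1 - y1.1), y1.2 + t * (w.2 - y1.2)) /\ 0 < t) /\ t < 1.
  apply: filterI; last exact: nbhs_right_lt.
  apply: filterI; first exact: nr.
  exact: nbhs_right_gt.
move=> /filter_ex [t [[[Og Yt] t0] t1]].
set y' := (y1.1 + t * (w.1 - y1.1), y1.2 + t * (w.2 - y1.2)) in Og Yt.
have := Hmin (g y'); rewrite inE /= fg // => /(_ (OK _ Og)).
have -> : rho w y' = (1 - t) * rho w y1.
  rewrite /rho /y' /=.
  have -> : y1.1 + t * (w.1 - y1.1) - w.1 = (1 - t) * (y1.1 - w.1) by ring.
  have -> : y1.2 + t * (w.2 - y1.2) - w.2 = (1 - t) * (y1.2 - w.2) by ring.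
  rewrite !normrM (ger0_norm (_ : 0 <= 1 - t)) ?mulrDr //; lra.
rewrite -/y1 => hle; move: hle (mulr_gt0 t0 rpos); rewrite mulrBl mul1r.
move: (t * rho w y1) (rho w y1) => s r; clear; lra.
Qed.
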